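(* Let $\mathbb{F}$ be a field of characteristic not equal to $2$, and let $\ell_1,\ell_2,\ell_3 \in \mathbb{F}$ with $\ell_1 \ne 0$. Let $x_1,x_2 \in \mathbb{F}^2$ with $\|x_1-x_2\| = \ell_1$. Then the number of points $x_3 \in \mathbb{F}^2$ with $\|x_2-x_3\| = \ell_2$ and $\|x_3 - x_1\| = \ell_3$ is exactly $$\mu = \begin{cases} 2 & \text{if } 4\sigma_2-\sigma_1^2 \text{ is a nonzero square in } \mathbb{F},\\ 1 & \text{if } 4\sigma_2-\sigma_1^2 = 0,\\ 0 & \text{if } 4\sigma_2-\sigma_1^2 \text{ is a nonsquare in }\mathbb{F},\end{cases}$$ where $\sigma_1 = \ell_1+\ell_2+\ell_3$ and $\sigma_2 = \ell_1\ell_2+\ell_2\ell_3+\ell_3\ell_1$.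
   Context: For $u=(u_1,u_2), v=(v_1,v_2)\in\mathbb{F}^2$, $\|u-v\| = (u_1-v_1)^2+(u_2-v_2)^2\in\mathbb{F}$. *)

(* Defs.v *)
From HB Require Import structures.
From mathcomp Require Import all_boot all_order all_algebra.
Set Implicit Arguments. Unset Strict Implicit. Unset Printing Implicit Defensive.
Import Order.TTheory GRing.Theory Num.Theory.
Local Open Scope ring_scope.

(* ||u - v|| = (u1-v1)^2 + (u2-v2)^2 in F, for u v in F^2 = F * F. *)
Definition sqdist (F : fieldType) (u v : F * F) : F :=
  (u.1 - v.1) ^+ 2 + (u.2 - v.2) ^+ 2.

Definition has_exactly (T : eqType) (P : T -> Prop) (n : nat) : Prop :=
  exists s : seq T, [/\ uniq s, size s = n & forall x, P x <-> x \in s].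

Definition is_square (F : fieldType) (a : F) : Prop := exists y : F, y ^+ 2 = a.

(* Main.v *)
Require Import Defs.
From HB Require Import structures.
From mathcomp Require Import all_boot all_order all_algebra.
From mathcomp Require Import ring.
Import Order.TTheory GRing.Theory Num.Theory.
Local Open Scope ring_scope.

Lemma keyl (F : fieldType) (p1 p2 w1 w2 l1 l2 l3 y1 y2 : F) :
  (2%:R : F) != 0 -> l1 != 0 -> (p1-w1)^+2 + (p2-w2)^+2 = l1 ->
  ((w1-y1)^+2 + (w2-y2)^+2 = l2 /\ (y1-p1)^+2 + (y2-p2)^+2 = l3) <->
  exists b : F, (b * (2%:R * l1))^+2 = 4%:R * (l1 * l2 + l2 * l3 + l3 * l1) - (l1 + l2 + l3)^+2 /\
    (y1, y2) = (w1 + (l1 + l2 - l3) / (2%:R * l1)*(p1-w1) - b*(p2-w2),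
                w2 + (l1 + l2 - l3) / (2%:R * l1)*(p2-w2) + b*(p1-w1)).
Proof.
move=> h2 hl1 hd.
have h4 : (4%:R : F) != 0 by rewrite (_ : 4%:R = 2%:R * 2%:R) ?mulf_neq0 // -natrM.
split.
- case=> e1 e2; subst l1 l2 l3.
  exists (((y1-w1)*(-(p2-w2)) + (y2-w2)*(p1-w1)) / ((p1-w1)^+2 + (p2-w2)^+2)).
  split; first by field; rewrite ?hl1 ?h2.
  by congr pair; field; rewrite ?hl1 ?h2.
case=> b [hb [-> ->]].
set D := 4%:R * (l1 * l2 + l2 * l3 + l3 * l1) - (l1 + l2 + l3)^+2 in hb *.
split.
  have -> : (w1 - (w1 + (l1 + l2 - l3) / (2%:R * l1) * (p1 - w1) - b * (p2 - w2))) ^+ 2 +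
    (w2 - (w2 + (l1 + l2 - l3) / (2%:R * l1) * (p2 - w2) + b * (p1 - w1))) ^+ 2
    = l2 + ((b * (2%:R * l1))^+2 - D) / (4%:R * l1).
    by rewrite /D -hd; field; rewrite ?hd ?hl1 ?h2 ?h4.
  by rewrite -hb subrr mul0r addr0.
have -> : (w1 + (l1 + l2 - l3) / (2%:R * l1) * (p1 - w1) - b * (p2 - w2) - p1) ^+ 2 +
    (w2 + (l1 + l2 - l3) / (2%:R * l1) * (p2 - w2) + b * (p1 - w1) - p2) ^+ 2
    = l3 + ((b * (2%:R * l1))^+2 - D) / (4%:R * l1).
  by rewrite /D -hd; field; rewrite ?hd ?hl1 ?h2 ?h4.
by rewrite -hb subrr mul0r addr0.
Qed.

Theorem lemma4p1 (F : fieldType) (l1 l2 l3 : F) (x1 x2 : F * F) :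
  (2%:R : F) != 0 ->
  l1 != 0 ->
  sqdist x1 x2 = l1 ->
  let s1 := l1 + l2 + l3 in
  let s2 := l1 * l2 + l2 * l3 + l3 * l1 in
  let D := 4%:R * s2 - s1 ^+ 2 in
  let P := fun x3 : F * F => sqdist x2 x3 = l2 /\ sqdist x3 x1 = l3 in
  [/\ (D != 0 -> is_square D -> has_exactly P 2),
      (D = 0 -> has_exactly P 1)
    & (~ is_square D -> has_exactly P 0)].
Proof.
case: x1 x2 => [p1 p2] [w1 w2] h2 hl1 hd s1 s2 D P.
rewrite /sqdist /= in hd.
have hq : 2%:R * l1 != 0 by rewrite mulf_neq0.
set q := 2%:R * l1 in hq.
pose X (b : F) := (w1 + (l1 + l2 - l3) / (2%:R * l1) * (p1 - w1) - b * (p2 - w2),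
                   w2 + (l1 + l2 - l3) / (2%:R * l1) * (p2 - w2) + b * (p1 - w1)).
have key : forall x, P x <-> exists b, (b * q) ^+ 2 = D /\ x = X b.
  by move=> [y1 y2]; rewrite /P /sqdist /=; exact: keyl.
have Xinj : injective X.
  move=> b b' e.
  have : (b - b') ^+ 2 * l1 = ((X b).1 - (X b').1) ^+ 2 + ((X b).2 - (X b').2) ^+ 2.
    by rewrite -hd /X /=; ring.
  rewrite e !subrr expr0n /= addr0 => /eqP.
  rewrite mulf_eq0 (negbTE hl1) orbF expf_eq0 /= subr_eq0 => /eqP //.
split.
- move=> hD [r hr].
  have hr0 : r != 0 by apply: contra hD => /eqP r0; rewrite -hr r0 expr0n.
  exists [:: X (r / q); X (- (r / q))]; split => //.
    rewrite /= inE andbT; apply/negP => /eqP /Xinj /eqP.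
    rewrite -subr_eq0 opprK -mulr2n -mulr_natr mulf_eq0 (negbTE h2) orbF.
    by rewrite mulf_eq0 invr_eq0 (negbTE hq) (negbTE hr0).
  move=> x; rewrite key !inE; split.
    case=> b [hb ->].
    have : (b * q - r) * (b * q + r) == 0.
      by rewrite -subr_sqr hb hr subrr.
    rewrite mulf_eq0 => /orP [|] ; rewrite ?subr_eq0 ?addr_eq0 => /eqP hbq.
      by rewrite -hbq mulfK // eqxx.
    by rewrite -mulNr -hbq mulfK // eqxx orbT.
  case/orP => /eqP ->.
    by exists (r / q); rewrite divfK.
  by exists (- (r / q)); rewrite mulNr divfK // sqrrN.
- move=> hD; exists [:: X 0]; split => // x; rewrite key inE; split.
    case=> b [hb ->]; move: hb; rewrite hD => /eqP.
    by rewrite expf_eq0 /= mulf_eq0 (negbTE hq) orbF => /eqP ->.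
  by move/eqP ->; exists 0; rewrite mul0r expr0n.
- move=> hD; exists [::]; split => // x; rewrite key in_nil; split => //.
  by case=> b [hb _]; case: hD; exists (b * q).
Qed.
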